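(* Let $x$, $y$, $z$ be non-zero octonions, and define \[ [x,y,z] = \bigl(z^{-1}(y^{-1}x^{-1})\bigr)\bigl(x(yz)\bigr). \] Then \[ \bigl((xy)z\bigr)[x,y,z] = x(yz) \qquad\text{and}\qquad (xy)z = \bigl(x(yz)\bigr)\,\overline{[x,y,z]}, \] where $\overline{q}$ denotes the octonion conjugate of $q$.
   Context: Octonion multiplication is non-associative and non-commutative. Every non-zero octonion $q$ has a multiplicative inverse $q^{-1}$, satisfying $q q^{-1} = q^{-1} q = 1$. In each product above, the parentheses indicate the order of evaluation. *)

(* Defs.v *)
From HB Require Import structures.
From mathcomp Require Import all_boot all_order all_algebra.
From mathcomp Require Import reals.
Set Implicit Arguments. Unset Strict Implicit. Unset Printing Implicit Defensive.
Import Order.TTheory GRing.Theory Num.Theory.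
Local Open Scope ring_scope.

(* Generic Cayley-Dickson doubling of an algebra with conjugation (T, add, opp, mul, conj):
   (a,b)(c,d) = (a c - conj(d) b, d a + b conj(c)), conj((a,b)) = (conj(a), -b). *)
Section CayleyDickson.
Variables (T : Type) (add : T -> T -> T) (opp : T -> T) (mul : T -> T -> T)
  (conj : T -> T).
Definition cd_add (x y : T * T) : T * T := (add x.1 y.1, add x.2 y.2).
Definition cd_opp (x : T * T) : T * T := (opp x.1, opp x.2).
Definition cd_mul (x y : T * T) : T * T :=
  (add (mul x.1 y.1) (opp (mul (conj y.2) x.2)),
   add (mul y.2 x.1) (mul x.2 (conj y.1))).
Definition cd_conj (x : T * T) : T * T := (conj x.1, opp x.2).
End CayleyDickson.

Definition cd_scale (S T : Type) (sc : S -> T -> T) (r : S) (x : T * T) : T * T :=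
  (sc r x.1, sc r x.2).

Section Octonions.
Variable R : realType.

Definition cpx := (R * R)%type.
Definition quat := (cpx * cpx)%type.
Definition oct := (quat * quat)%type.

Definition cpx_add : cpx -> cpx -> cpx := @cd_add R +%R.
Definition cpx_opp : cpx -> cpx := @cd_opp R -%R.
Definition cpx_mul : cpx -> cpx -> cpx := @cd_mul R +%R -%R *%R id.
Definition cpx_conj : cpx -> cpx := @cd_conj R -%R id.
Definition cpx_scale : R -> cpx -> cpx := @cd_scale R R *%R.

Definition quat_add : quat -> quat -> quat := @cd_add cpx cpx_add.
Definition quat_opp : quat -> quat := @cd_opp cpx cpx_opp.
Definition quat_mul : quat -> quat -> quat := @cd_mul cpx cpx_add cpx_opp cpx_mul cpx_conj.
Definition quat_conj : quat -> quat := @cd_conj cpx cpx_opp cpx_conj.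
Definition quat_scale : R -> quat -> quat := @cd_scale R cpx cpx_scale.

Definition oct_mul : oct -> oct -> oct := @cd_mul quat quat_add quat_opp quat_mul quat_conj.
Definition oct_conj : oct -> oct := @cd_conj quat quat_opp quat_conj.
Definition oct_scale : R -> oct -> oct := @cd_scale R quat quat_scale.

Definition oct0 : oct := (((0, 0), (0, 0)), ((0, 0), (0, 0))).
Definition oct1 : oct := (((1, 0), (0, 0)), ((0, 0), (0, 0))).

(* squared Euclidean norm: q * conj q = oct_norm2 q * 1 *)
Definition oct_norm2 (q : oct) : R :=
  let: (((a0, a1), (a2, a3)), ((a4, a5), (a6, a7))) := q in
  a0 ^+ 2 + a1 ^+ 2 + a2 ^+ 2 + a3 ^+ 2 + a4 ^+ 2 + a5 ^+ 2 + a6 ^+ 2 + a7 ^+ 2.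

Definition oct_inv (q : oct) : oct := oct_scale (oct_norm2 q)^-1 (oct_conj q).

Definition oct_bracket (x y z : oct) : oct :=
  oct_mul (oct_mul (oct_inv z) (oct_mul (oct_inv y) (oct_inv x)))
          (oct_mul x (oct_mul y z)).
End Octonions.

(* Main.v *)
Require Import Defs.
From mathcomp Require Import all_boot all_order all_algebra.
From mathcomp Require Import reals ring.
Import Order.TTheory GRing.Theory Num.Theory.
Local Open Scope ring_scope.

Ltac oexp := cbv beta iota zeta delta [oct_mul oct_conj oct_scale oct_norm2 quat_mul quat_conj quat_add quat_opp quat_scale cpx_mul cpx_conj cpx_add cpx_opp cpx_scale cd_mul cd_conj cd_add cd_opp cd_scale fst snd].
Ltac odes p := case: p => [[[? ?] [? ?]] [[? ?] [? ?]]].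
Ltac ocg := congr (((_,_),(_,_)),((_,_),(_,_))); ring.

Section S.
Variable R : realType.
Implicit Types (p q : oct R) (r s : R).

Lemma oconj_mul p q : oct_conj (oct_mul p q) = oct_mul (oct_conj q) (oct_conj p).
Proof. odes p; odes q; oexp; ocg. Qed.
Lemma conjK p : oct_conj (oct_conj p) = p.
Proof. odes p; oexp; ocg. Qed.
Lemma norm_mul p q : oct_norm2 (oct_mul p q) = oct_norm2 p * oct_norm2 q.
Proof. odes p; odes q; oexp; ring. Qed.
Lemma norm_conj p : oct_norm2 (oct_conj p) = oct_norm2 p.
Proof. odes p; oexp; ring. Qed.
Lemma alt p q : oct_mul p (oct_mul (oct_conj p) q) = oct_scale (oct_norm2 p) q.
Proof. odes p; odes q; oexp; ocg. Qed.
Lemma mulZl r p q : oct_mul (oct_scale r p) q = oct_scale r (oct_mul p q).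
Proof. odes p; odes q; oexp; ocg. Qed.
Lemma mulZr r p q : oct_mul p (oct_scale r q) = oct_scale r (oct_mul p q).
Proof. odes p; odes q; oexp; ocg. Qed.
Lemma conjZ r p : oct_conj (oct_scale r p) = oct_scale r (oct_conj p).
Proof. odes p; oexp; ocg. Qed.
Lemma scaleZ r s p : oct_scale r (oct_scale s p) = oct_scale (r * s) p.
Proof. odes p; oexp; ocg. Qed.
Lemma scale1 p : oct_scale 1 p = p.
Proof. odes p; oexp; ocg. Qed.
Lemma norm_neq0 p : p <> oct0 R -> oct_norm2 p != 0.
Proof.
case: p => [[[a0 a1] [a2 a3]] [[a4 a5] [a6 a7]]] Hp; oexp; apply/negP => /eqP H; apply: Hp.
have P (a b : R) : 0 <= a -> a + b ^+ 2 = 0 -> a = 0 /\ b = 0.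
  move=> Ha /eqP; rewrite paddr_eq0 ?sqr_ge0 // sqrf_eq0 => /andP[/eqP -> /eqP ->]; done.
have Q (a b : R) : a ^+ 2 + b ^+ 2 = 0 -> a = 0 /\ b = 0.
  move=> /P []; rewrite ?sqr_ge0 // => /eqP; rewrite sqrf_eq0 => /eqP -> ->; done.
move: H => /P [|/P [|/P [|/P [|/P [|/P [|/Q [] ]]]]]]; rewrite ?addr_ge0 ?sqr_ge0 //.
by move=> -> -> -> -> -> -> -> ->.
Qed.
Lemma inv_mul p q : oct_inv (oct_mul p q) = oct_mul (oct_inv q) (oct_inv p).
Proof. by rewrite /oct_inv oconj_mul mulZl mulZr scaleZ norm_mul invfM mulrC. Qed.
End S.

Theorem theorem1 (R : realType) (x y z : oct R) :
  x <> oct0 R -> y <> oct0 R -> z <> oct0 R ->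
  oct_mul (oct_mul (oct_mul x y) z) (oct_bracket x y z) = oct_mul x (oct_mul y z) /\
  oct_mul (oct_mul x y) z = oct_mul (oct_mul x (oct_mul y z)) (oct_conj (oct_bracket x y z)).
Proof.
move=> hx hy hz.
have Nx := @norm_neq0 R _ hx; have Ny := @norm_neq0 R _ hy; have Nz := @norm_neq0 R _ hz.
rewrite /oct_bracket -!inv_mul.
set a := oct_mul (oct_mul x y) z; set b := oct_mul x (oct_mul y z).
have Na : oct_norm2 a != 0 by rewrite /a !norm_mul !mulf_neq0.
have Nab : oct_norm2 b = oct_norm2 a by rewrite /a /b !norm_mul mulrA.
split.
  by rewrite /oct_inv mulZl mulZr alt scaleZ mulVf // scale1.
by rewrite /oct_inv oconj_mul conjZ conjK !mulZr alt scaleZ Nab mulVf // scale1.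
Qed.
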